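(* Let $K$ be the field of fractions of a complete discrete valuation ring $\mathcal{O}$. In the coefficient-choosing game of degree $d = 2$ over $K$, whichever player makes the last move has a winning strategy.
   Context: The coefficient-choosing game of degree $d$ over $K$: Nora and Wanda alternately choose coefficients of $f(x) = a_d x^d + \cdots + a_0$; on each move the current player picks a not-yet-chosen coefficient and assigns it a value in $K$, subject to $a_d \neq 0$, $a_0 \neq 0$. After all $d+1$ coefficients are chosen, Wanda wins if $f$ has a root in $K$, and Nora wins otherwise. Who moves first is fixed in advance. *)

(* Defs.v *)
From HB Require Import structures.
From mathcomp Require Import all_boot all_order all_algebra.
Set Implicit Arguments. Unset Strict Implicit. Unset Printing Implicit Defensive.
Import Order.TTheory GRing.Theory Num.Theory.
Local Open Scope ring_scope.

(* v is a normalized discrete valuation on K (the value at 0 is irrelevant,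
   conceptually v 0 = +oo). Its valuation ring O = [x | x = 0 \/ 0 <= v x]
   is a DVR whose fraction field is K. *)
Definition is_discrete_valuation (K : fieldType) (v : K -> int) : Prop :=
  [/\ (forall x y : K, x != 0 -> y != 0 -> v (x * y) = v x + v y),
      (forall x y : K, x != 0 -> y != 0 -> x + y != 0 ->
          Num.min (v x) (v y) <= v (x + y)) &
      (exists pi : K, pi != 0 /\ v pi = 1)].

Definition vsmall (K : fieldType) (v : K -> int) (N : int) (x : K) : Prop :=
  x = 0 \/ N <= v x.

Definition v_cauchy (K : fieldType) (v : K -> int) (u : nat -> K) : Prop :=
  forall N : int, exists M : nat, forall m n : nat, (M <= m)%N -> (M <= n)%N ->
    vsmall v N (u m - u n).

Definition v_converges (K : fieldType) (v : K -> int) (u : nat -> K) (l : K) : Prop :=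
  forall N : int, exists M : nat, forall n : nat, (M <= n)%N -> vsmall v N (u n - l).

Definition v_complete (K : fieldType) (v : K -> int) : Prop :=
  forall u : nat -> K, v_cauchy v u -> exists l : K, v_converges v u l.

(* K is the fraction field of a complete DVR: K carries a complete discrete valuation *)
Definition complete_dvf (K : fieldType) (v : K -> int) : Prop :=
  is_discrete_valuation v /\ v_complete v.

Section Game.
Variables (K : fieldType) (d : nat).

(* a position: coefficient a_i is either chosen (Some c) or not yet (None) *)
Definition position := {ffun 'I_d.+1 -> option K}.

Definition start_pos : position := [ffun => None].

Definition legal_move (s : position) (i : 'I_d.+1) (c : K) : Prop :=
  s i = None /\ (((i : nat) == 0%N) || ((i : nat) == d) -> c != 0).

Definition play (s : position) (i : 'I_d.+1) (c : K) : position :=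
  [ffun j => if j == i then Some c else s j].

Definition final_poly (s : position) : {poly K} :=
  \poly_(i < d.+1) odflt 0 (s (inord i)).

Definition has_root_in_K (s : position) : Prop := exists x : K, root (final_poly s) x.

(* Players: true = Wanda, false = Nora.
   game_win p n s m : player p has a winning strategy from position s,
   with n moves remaining and player m to move. *)
Fixpoint game_win (p : bool) (n : nat) (s : position) (m : bool) : Prop :=
  match n with
  | 0 => if p then has_root_in_K s else ~ has_root_in_K s
  | n'.+1 =>
      if m == p then
        exists i c, legal_move s i c /\ game_win p n' (play s i c) (~~ m)
      else
        forall i c, legal_move s i c -> game_win p n' (play s i c) (~~ m)
  end.

Definition wins (p first : bool) : Prop := game_win p d.+1 start_pos first.

Definition last_mover (first : bool) : bool := if odd d then ~~ first else first.

End Game.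

(* Main.v *)
Require Import Defs.
From mathcomp Require Import all_boot all_order all_algebra.
From mathcomp Require Import zify ring.
Import GRing.Theory.
Local Open Scope ring_scope.

Lemma horner_final2 (K : fieldType) (s : position K 2) (x : K) :
  (final_poly s).[x] =
  odflt 0 (s (inord 0)) + odflt 0 (s (inord 1)) * x + odflt 0 (s (inord 2)) * x ^+ 2.
Proof.
rewrite /final_poly horner_poly !big_ord_recr big_ord0 /= add0r.
by rewrite expr0 mulr1 expr1.
Qed.

Lemma nosq (K : fieldType) (v : K -> int) (hv : is_discrete_valuation v)
  (pi : K) : pi != 0 -> v pi = 1 -> forall x, x * x != pi.
Proof.
case: hv => hm _ _ pi0 vpi x; apply/eqP => E.
have x0 : x != 0 by apply: contraNneq pi0 => x0; rewrite -E x0 mul0r.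
have := hm x x x0 x0; rewrite E vpi => H; lia.
Qed.

Theorem lemma11 (K : fieldType) (v : K -> int) (hv : complete_dvf v)
  (first : bool) :
  wins K 2 (last_mover 2 first) first.
Proof.
have o0 : (0 < 3)%N by []. have o1 : (1 < 3)%N by []. have o2 : (2 < 3)%N by [].
have e0 : (inord 0 : 'I_3) = Ordinal o0 by apply/val_inj; rewrite /= inordK.
have e1 : (inord 1 : 'I_3) = Ordinal o1 by apply/val_inj; rewrite /= inordK.
have e2 : (inord 2 : 'I_3) = Ordinal o2 by apply/val_inj; rewrite /= inordK.
case: first; rewrite /wins /last_mover /=.
- exists (Ordinal o1), 0; split; first by rewrite /legal_move ffunE.
  move=> [[|[|[|//]]] Hi] c [] /=; rewrite !ffunE /=.
  + move=> _ /(_ isT) c0.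
    exists (Ordinal o2), (- c); split.
      by split; [rewrite !ffunE | rewrite oppr_eq0].
    exists 1; rewrite /root horner_final2 e0 e1 e2 !ffunE /=.
    by apply/eqP; ring.
  + by [].
  + move=> _ /(_ isT) c0.
    exists (Ordinal o0), (- c); split.
      by split; [rewrite !ffunE | rewrite oppr_eq0].
    exists 1; rewrite /root horner_final2 e0 e1 e2 !ffunE /=.
    by apply/eqP; ring.
- case: hv => hv _. have hv' := hv. case: hv' => _ _ [pi [pi0 vpi]].
  have ns := @nosq _ v hv pi pi0 vpi.
  exists (Ordinal o1), 0; split; first by rewrite /legal_move ffunE.
  move=> [[|[|[|//]]] Hi] c [] /=; rewrite !ffunE /=.
  + move=> _ /(_ isT) c0.
    exists (Ordinal o2), (- c / pi); split.
      split; first by rewrite !ffunE.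
      by move=> _; rewrite mulf_neq0 ?invr_eq0 ?oppr_eq0.
    move=> [x]; rewrite /root horner_final2 e0 e1 e2 !ffunE /=.
    move/eqP=> H; have /eqP := ns x; apply.
    have : c * (1 - x * x / pi) = 0 by rewrite -H; field.
    move/eqP; rewrite mulf_eq0 (negbTE c0) /= subr_eq0 => /eqP H2.
    by rewrite -[x * x](divfK pi0) -H2 mul1r.
  + by [].
  + move=> _ /(_ isT) c0.
    exists (Ordinal o0), (- c * pi); split.
      split; first by rewrite !ffunE.
      by move=> _; rewrite mulf_neq0 ?oppr_eq0.
    move=> [x]; rewrite /root horner_final2 e0 e1 e2 !ffunE /=.
    move/eqP=> H; have /eqP := ns x; apply.
    have : c * (x * x - pi) = 0 by rewrite -H expr2; ring.
    move/eqP; rewrite mulf_eq0 (negbTE c0) /= subr_eq0 => /eqP //.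
Qed.
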